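(* Let $\mathcal V$ be a finite set, $2\le k\le|\mathcal V|-2$, let $\Gamma\subset\binom{\mathcal V}{k}$ be a code such that $G:={\rm Aut}(\Gamma)\cap{\rm Sym}(\mathcal V)$ is transitive on $\mathcal V$. Then for $u\in\mathcal V$ the set $\Delta(u)=\bigcap\{\gamma'\in\Gamma : u\in\gamma'\}$ is a block of imprimitivity for $G$ in $\mathcal V$. In particular, if $G$ is primitive on $\mathcal V$, then $\Delta(u)=\{u\}$.
   Context: A code is a proper non-empty subset $\Gamma$ of $\binom{\mathcal V}{k}$, the set of $k$-subsets of $\mathcal V$ (vertex set of the Johnson graph $J(|\mathcal V|,k)$, adjacency meaning intersection of size $k-1$). ${\rm Aut}(\Gamma)$ is the setwise stabiliser of $\Gamma$ in the automorphism group of the Johnson graph. *)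

(* Defs.v *)
From mathcomp Require Import all_boot all_fingroup.
Set Implicit Arguments. Unset Strict Implicit. Unset Printing Implicit Defensive.

Definition ksubsets (V : finType) (k : nat) : {set {set V}} :=
  [set A : {set V} | #|A| == k].

Definition is_code (V : finType) (k : nat) (Gamma : {set {set V}}) : Prop :=
  Gamma != set0 /\ Gamma \proper ksubsets V k.

(* Aut(Gamma) ∩ Sym(V): permutations of V whose induced action on
   k-subsets stabilises Gamma setwise. *)
Definition AutSym (V : finType) (Gamma : {set {set V}}) : {set {perm V}} :=
  [set g : {perm V} | [set (g @: A) | A : {set V} in Gamma] == Gamma].

Definition transitive_on (V : finType) (G : {set {perm V}}) : Prop :=
  forall x y : V, exists2 g, g \in G & g x = y.

Definition is_block (V : finType) (G : {set {perm V}}) (B : {set V}) : Prop :=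
  forall g, g \in G -> g @: B = B \/ [disjoint g @: B & B].

Definition primitive_on (V : finType) (G : {set {perm V}}) : Prop :=
  transitive_on G /\
  forall B : {set V}, is_block G B -> B != set0 -> #|B| = 1 \/ B = setT.

Definition Delta (V : finType) (Gamma : {set {set V}}) (u : V) : {set V} :=
  \bigcap_(c in Gamma | u \in c) c.

(* Main.v *)
Require Import Defs.
From mathcomp Require Import all_boot all_fingroup.
From mathcomp Require Import zify.
Set Implicit Arguments.

Section H.
Variables (V : finType) (Gamma : {set {set V}}).

Lemma Aut_fwd g c : g \in AutSym Gamma -> c \in Gamma -> g @: c \in Gamma.
Proof.
rewrite inE => /eqP E Hc; rewrite -E; exact: imset_f.
Qed.

Lemma Aut_bwd g c : g \in AutSym Gamma -> c \in Gamma ->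
  exists2 c', c' \in Gamma & g @: c' = c.
Proof.
rewrite inE => /eqP E Hc; have := Hc; rewrite -{1}E => /imsetP [c' Hc' ->].
exists c'. exact: Hc'. reflexivity.
Qed.

Lemma DeltaP x u : reflect (forall c, c \in Gamma -> u \in c -> x \in c)
  (x \in Delta Gamma u).
Proof.
apply: (iffP bigcapP) => H c.
  by move=> Hc Hu; apply: H; rewrite Hc Hu.
by move=> /andP [Hc Hu]; apply: H.
Qed.

Lemma DeltaJ g u : g \in AutSym Gamma -> g @: Delta Gamma u = Delta Gamma (g u).
Proof.
move=> Hg; apply/setP => x; apply/idP/idP.
  case/imsetP => y /DeltaP Hy ->; apply/DeltaP => c Hc.
  have [c' Hc' Ec] := Aut_bwd Hg Hc.
  rewrite -Ec (mem_imset _ _ (@perm_inj _ g)) => Hu.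
  exact: imset_f (Hy _ Hc' Hu).
move/DeltaP => Hx.
have -> : x = g ((g^-1)%g x) by rewrite permKV.
rewrite (mem_imset _ _ (@perm_inj _ g)); apply/DeltaP => c Hc Hu.
have := Hx _ (Aut_fwd Hg Hc) (imset_f _ Hu).
by rewrite -{1}(permKV g x) (mem_imset _ _ (@perm_inj _ g)).
Qed.

Lemma Delta_self u : u \in Delta Gamma u.
Proof. by apply/DeltaP. Qed.

Lemma Delta_sub u w : w \in Delta Gamma u -> Delta Gamma w \subset Delta Gamma u.
Proof.
move/DeltaP => Hw; apply/subsetP => x /DeltaP Hx; apply/DeltaP => c Hc Hu.
exact: Hx _ Hc (Hw _ Hc Hu).
Qed.

Lemma Delta_card u v : transitive_on (AutSym Gamma) ->
  #|Delta Gamma v| = #|Delta Gamma u|.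
Proof.
move=> Ht; have [g Hg <-] := Ht u v.
by rewrite -DeltaJ // card_imset //; apply: perm_inj.
Qed.

Lemma Delta_eq u w : transitive_on (AutSym Gamma) ->
  w \in Delta Gamma u -> Delta Gamma w = Delta Gamma u.
Proof.
move=> Ht Hw; apply/eqP; rewrite eqEcard (Delta_sub Hw) /=.
by rewrite (Delta_card w u Ht).
Qed.
End H.

Theorem lemma5p1 (V : finType) (k : nat) (Gamma : {set {set V}}) :
  2 <= k -> k <= #|V| - 2 ->
  is_code k Gamma ->
  transitive_on (AutSym Gamma) ->
  forall u : V,
    is_block (AutSym Gamma) (Delta Gamma u) /\
    (primitive_on (AutSym Gamma) -> Delta Gamma u = [set u]).
Proof.
move=> Hk HkV [Hne Hpr] Ht u.
have Hblock : is_block (AutSym Gamma) (Delta Gamma u).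
  move=> g Hg; rewrite DeltaJ //.
  case: (boolP [disjoint Delta Gamma (g u) & Delta Gamma u]) => H; first by right.
  left; move: H; rewrite -setI_eq0 => /set0Pn [w]; rewrite inE => /andP [H1 H2].
  by rewrite -(Delta_eq Ht H1) (Delta_eq Ht H2).
split => // [[_ Hprim]].
have Hn : Delta Gamma u != set0 by apply/set0Pn; exists u; apply: Delta_self.
case: (Hprim _ Hblock Hn) => [H1 | HT].
  have [x Ex] := cards1P (introT eqP H1).
  by move: (@Delta_self _ Gamma u); rewrite Ex inE => /eqP <-.
exfalso.
have /set0Pn [c Hc] := Hne.
have Hck : #|c| = k.
  by have := proper_sub Hpr => /subsetP /(_ _ Hc); rewrite inE => /eqP.
have /set0Pn [v Hv] : c != set0.
  by apply/eqP => E; move: Hck; rewrite E cards0 => E0; rewrite -E0 in Hk.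
have Hv' : Delta Gamma v = setT.
  have [g Hg <-] := Ht u v; rewrite -DeltaJ // HT; apply/eqP; rewrite eqEcard subsetT card_imset //=; exact: perm_inj.
have : setT \subset c.
  rewrite -Hv'; apply/subsetP => x /DeltaP; by apply.
rewrite subTset => /eqP Ec.
move: Hck; rewrite Ec cardsT => E.
move: HkV Hk; rewrite -E; lia.
Qed.
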